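(* For all integers $t,a,b,r$ with $a\ge2$ and $b\ge1$, define \[ f(t,a,b,r)=\sum_{i=1}^{a-1}(-1)^{a+i}\binom{t-1}{i-1}\binom{t-2-a+r+i}{b-1}, \] \[ g(t,a,b,r)=-\binom{t-2}{a-2}\binom{t-2+r}{b-1}+\sum_{i=1}^{a-1}(-1)^{a+i+1}\binom{t-2}{i-1}\binom{t-2-a+r+i}{b-2}. \] Then $f(t,a,b,r)=g(t,a,b,r)$ for all such $t,a,b,r$.
   Context: Binomial coefficients are polynomials in the upper entry: $\binom{x}{k}=\frac{x(x-1)\cdots(x-k+1)}{k!}$ for integers $k\ge0$ and any integer $x$ (possibly negative), and $\binom{x}{k}=0$ for $k<0$. *)

(* Defs.v *)
From mathcomp Require Import all_boot all_order all_algebra.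
Set Implicit Arguments. Unset Strict Implicit. Unset Printing Implicit Defensive.
Import GRing.Theory Num.Theory.
Local Open Scope ring_scope.

Definition binz (x k : int) : rat :=
  match k with
  | Posz n => (\prod_(j < n) ((x - (j : nat)%:Z)%:~R : rat)) / (n`!)%:R
  | Negz _ => 0
  end.

(* Main.v *)
Require Import Defs.
From mathcomp Require Import all_boot all_order all_algebra.
From mathcomp Require Import ring zify.
Import GRing.Theory Num.Theory.
Local Open Scope ring_scope.

Lemma pascal (x k : int) : binz (x + 1) k = binz x k + binz x (k - 1).
Proof.
case: k => [[|n]|n].
- by rewrite /binz /= !big_ord0 addr0.
- have -> : (Posz n.+1 - 1) = Posz n by rewrite -addn1 PoszD addrK.
  rewrite /binz big_ord_recl big_ord_recr /=.
  have -> : \prod_(i < n) ((x + 1 - (Posz (bump 0 i)))%:~R : rat)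
          = \prod_(i < n) ((x - (Posz i))%:~R : rat).
    apply: eq_bigr => i _; congr (_%:~R); rewrite /bump /= -addn1 PoszD; ring.
  set P := \prod_(i < n) _.
  rewrite factS natrM.
  have h1 : (n`!)%:R != 0 :> rat by rewrite pnatr_eq0 -lt0n fact_gt0.
  have h2 : (n.+1)%:R != 0 :> rat by rewrite pnatr_eq0.
  rewrite ?rmorphD ?rmorphB ?rmorphN /= ?intr_nat ?mulrz_nat ?oppr0 ?addr0.
  field.
  by rewrite h1 addrC natr1.
- by [].
Qed.

Lemma tele (C : int -> rat) (u v : nat -> rat) (C0 : C 0 = 0)
  (huv : forall i, u i + v i = u i.+1) (n : nat) :
  \sum_(1 <= i < n.+1) ((-1) ^+ i * ((C i%:Z + C (i%:Z - 1)) * u i + C i%:Z * v i))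
  = (-1) ^+ n * C n%:Z * u n.+1.
Proof.
elim: n => [|n IH]; first by rewrite big_geq // C0 !mulr0 mul0r.
rewrite big_nat_recr //= IH.
have -> : (Posz n.+1 - 1) = Posz n by rewrite -addn1 PoszD addrK.
rewrite -(huv n.+1) exprS; ring.
Qed.

Theorem lemma5p5 (t a b r : int) (ha : 2 <= a) (hb : 1 <= b) :
  \sum_(1 <= i < `|a|%N) ((-1) ^+ (`|a| + i)%N
      * binz (t - 1) (i%:Z - 1) * binz (t - 2 - a + r + i%:Z) (b - 1))
  = - binz (t - 2) (a - 2) * binz (t - 2 + r) (b - 1)
    + \sum_(1 <= i < `|a|%N) ((-1) ^+ (`|a| + i + 1)%N
      * binz (t - 2) (i%:Z - 1) * binz (t - 2 - a + r + i%:Z) (b - 2)).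
Proof.
case: a ha => [[|m]|m] ha; try by [].
rewrite /=.
set C := fun k : int => binz (t - 2) (k - 1).
set u := fun i : nat => binz (t - 2 - (Posz m.+1) + r + i%:Z) (b - 1).
set v := fun i : nat => binz (t - 2 - (Posz m.+1) + r + i%:Z) (b - 2).
have C0 : C 0 = 0 by [].
have huv : forall i, u i + v i = u i.+1.
  move=> i; rewrite /u /v.
  have -> : b - 2 = b - 1 - 1 by ring.
  rewrite -pascal; congr binz; lia.
have := @tele C u v C0 huv m.
have -> : binz (t - 2) (Posz m.+1 - 2) = C m by rewrite /C; congr binz; ring.
have -> : binz (t - 2 + r) (b - 1) = u m.+1 by rewrite /u; congr binz; ring.
move=> H.
have E1 : \sum_(1 <= i < m.+1) ((-1) ^+ (m.+1 + i)%N * binz (t - 1) (i%:Z - 1)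
    * binz (t - 2 - (Posz m.+1) + r + i%:Z) (b - 1))
  = (-1) ^+ m.+1 * \sum_(1 <= i < m.+1) ((-1) ^+ i * ((C i%:Z + C (i%:Z - 1)) * u i)).
  rewrite big_distrr /=; apply: eq_bigr => i _.
  have -> : t - 1 = t - 2 + 1 by ring.
  rewrite pascal exprD /C /u; ring.
have E2 : \sum_(1 <= i < m.+1) ((-1) ^+ (m.+1 + i + 1)%N * binz (t - 2) (i%:Z - 1)
    * binz (t - 2 - (Posz m.+1) + r + i%:Z) (b - 2))
  = - ((-1) ^+ m.+1 * \sum_(1 <= i < m.+1) ((-1) ^+ i * (C i%:Z * v i))).
  rewrite big_distrr /= -sumrN; apply: eq_bigr => i _.
  rewrite !exprD /C /v; ring.
rewrite E1 E2.
have sq : (-1) ^+ m * (-1) ^+ m = 1 :> rat by rewrite -exprMn mulrNN mulr1 expr1n.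
have sq' : C m * u m.+1 = (-1) ^+ m * (-1) ^+ m * (C m * u m.+1) by rewrite sq mul1r.
have H2 : \sum_(1 <= i < m.+1) ((-1) ^+ i * ((C i%:Z + C (i%:Z - 1)) * u i))
  = (-1) ^+ m * C m * u m.+1 - \sum_(1 <= i < m.+1) ((-1) ^+ i * (C i%:Z * v i)).
  rewrite -H -sumrB; apply: eq_bigr => i _; ring.
rewrite H2 mulNr sq' exprS; ring.
Qed.
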